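(* Let $a_1,a_2$ be nonzero integers and $(U_n)_{n\ge0}$ the Lucas sequence with $U_0=0$, $U_1=1$, $U_n=a_1U_{n-1}+a_2U_{n-2}$; let $\alpha,\beta$ be the roots of $X^2-a_1X-a_2$, assume $\alpha/\beta$ is not a root of unity and $\Delta:=a_1^2+4a_2$ is not a square. For every positive integer $d$ and every $x>1$, \[ \mathcal{R}_U(d;x)=\sum_{v\mid d^\infty}\sum_{a\mid d}\mu(a)\,\pi_{U,dv,av}(x), \] where the primes dividing $a_2\Delta$ are ignored in all counts.
   Context: $\rho_U(p)$ is the smallest positive integer $k$ with $p\mid U_k$; for $p\nmid a_2\Delta$, $\iota_U(p):=\big(p-\big(\tfrac{\Delta}{p}\big)\big)/\rho_U(p)$, with $\big(\tfrac{\Delta}{p}\big)$ the Legendre symbol. $\mathcal{R}_U(d;x):=\#\{p\le x:\ p\nmid a_2,\ d\mid\rho_U(p)\}$. For positive integers $m\mid n$, $\pi_{U,n,m}(x):=\#\{p\le x:\ p\nmid a_2\Delta,\ p\equiv\big(\tfrac{\Delta}{p}\big)\pmod n,\ m\mid\iota_U(p)\}$. The sum over $v\mid d^\infty$ runs over all positive integers $v$ all of whose prime factors divide $d$. $\mu$ is the Möbius function. *)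

(* Defs.v *)
From HB Require Import structures.
From mathcomp Require Import all_boot all_order all_algebra all_field.
From mathcomp Require Import boolp reals.
Set Implicit Arguments. Unset Strict Implicit. Unset Printing Implicit Defensive.
Import Order.TTheory GRing.Theory Num.Theory.
Local Open Scope ring_scope.

Fixpoint lucasU (a1 a2 : int) (n : nat) : int * int :=
  (* returns (U_n, U_{n+1}) *)
  match n with
  | 0%N => (0, 1)
  | k.+1 => let: (u, u') := lucasU a1 a2 k in (u', a1 * u' + a2 * u)
  end.
Definition U (a1 a2 : int) (n : nat) : int := (lucasU a1 a2 n).1.

Definition disc (a1 a2 : int) : int := a1 ^+ 2 + 4 * a2.

(* rho_U(p): the smallest positive k with p | U_k (0 if there is none). *)
Definition rho (a1 a2 : int) (p : nat) : nat :=
  match pselect (exists k, (0 < k)%N && (p%:Z %| U a1 a2 k)%Z) with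
  | left h => ex_minn h
  | right _ => 0%N
  end.

(* Legendre symbol (D/p) for an odd prime p (literal definition: 0 if p | D,
   1 if D is a nonzero square mod p, -1 otherwise); for p = 2 we use the
   Kronecker symbol convention. *)
Definition legendre (D : int) (p : nat) : int :=
  if (p%:Z %| D)%Z then 0
  else if p == 2%N then
         (if ((D %% 8)%Z == 1) || ((D %% 8)%Z == 7) then 1 else -1)
  else if [exists y : 'I_p, (p%:Z %| (y%:Z) ^+ 2 - D)%Z] then 1 else -1.

Definition iotaU (a1 a2 : int) (p : nat) : int :=
  ((p%:Z - legendre (disc a1 a2) p) %/ (rho a1 a2 p)%:Z)%Z.

Definition prime_count (R : realType) (x : R) (P : pred nat) : nat :=
  \sum_(p < (Num.truncn x).+1 | prime p && (p%:R <= x) && P p) 1%N.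

Definition RU (a1 a2 : int) (d : nat) (R : realType) (x : R) : nat :=
  prime_count x (fun p => ~~ (p%:Z %| a2 * disc a1 a2)%Z && (d %| rho a1 a2 p)%N).

Definition piU (a1 a2 : int) (n m : nat) (R : realType) (x : R) : nat :=
  prime_count x (fun p => [&& ~~ (p%:Z %| a2 * disc a1 a2)%Z,
                              (p%:Z == legendre (disc a1 a2) p %[mod n%:Z])%Z
                            & (m%:Z %| iotaU a1 a2 p)%Z]).

Definition moebius (n : nat) : int :=
  if (0 < n)%N && all (fun p => logn p n == 1%N) (primes n)
  then (-1) ^+ size (primes n) else 0.

(* v | d^oo : v is a positive integer all of whose prime factors divide d *)
Definition dinf (d v : nat) : bool := (0 < v)%N && all (fun p => (p %| d)%N) (primes v).

(* Main.v *)
Require Import Defs.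
From HB Require Import structures.
From mathcomp Require Import all_boot all_order all_algebra all_field.
From mathcomp Require Import boolp reals.
From mathcomp Require Import zify ring lra.
Import Order.TTheory GRing.Theory Num.Theory.
Local Open Scope ring_scope.

Lemma lucasUE a1 a2 n : lucasU a1 a2 n = (U a1 a2 n, U a1 a2 n.+1).
Proof. by elim: n => [//|n IH]; rewrite /U /= IH. Qed.

Lemma U0 a1 a2 : U a1 a2 0 = 0. Proof. by []. Qed.
Lemma U1 a1 a2 : U a1 a2 1 = 1. Proof. by []. Qed.
Lemma U_rec a1 a2 n : U a1 a2 n.+2 = a1 * U a1 a2 n.+1 + a2 * U a1 a2 n.
Proof. by rewrite {1}/U /= lucasUE. Qed.

Lemma U_add a1 a2 m n :
  U a1 a2 (m + n).+1 = U a1 a2 m.+1 * U a1 a2 n.+1 + a2 * U a1 a2 m * U a1 a2 n.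
Proof.
elim: n m => [|n IH] m; first by rewrite addn0 U1 U0 mulr1 mulr0 addr0.
rewrite addnS -addSn IH !U_rec; ring.
Qed.

Lemma U_roots (K : comNzRingType) a1 a2 (al be : K) :
  al + be = a1%:~R -> al * be = - a2%:~R -> forall n,
  (U a1 a2 n)%:~R * (al - be) = al ^+ n - be ^+ n.
Proof.
move=> hs hp.
suff: forall n, (U a1 a2 n)%:~R * (al - be) = al ^+ n - be ^+ n /\
  (U a1 a2 n.+1)%:~R * (al - be) = al ^+ n.+1 - be ^+ n.+1 by move=> h n; case: (h n).
elim=> [|n [IH1 IH2]]; first by rewrite U0 U1 /= mul0r subrr mul1r !expr1.
split=> //; rewrite U_rec rmorphD !rmorphM /= mulrDl -!mulrA IH1 IH2.
rewrite -hs -[a2%:~R]opprK -hp !exprS; ring.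
Qed.
Lemma Fp_int_eq0 p (z : int) : prime p ->
  ((z%:~R : 'F_p) == 0) = (p%:Z %| z)%Z.
Proof. by move=> pp; rewrite (dvdz_pcharf (pchar_Fp pp)). Qed.
Lemma fixed_in_image p (K : fieldType) (phi : {rmorphism 'F_p -> K}) (z : K) :
  prime p -> z ^+ p = z -> exists c : 'F_p, phi c = z.
Proof.
move=> pp hz; suff /existsP [c /eqP hc] : [exists c, phi c == z] by exists c.
apply: contraT => /existsPn hn.
pose Q : {poly K} := 'X^p - 'X.
have p1 := prime_gt1 pp.
have sQ : size Q = p.+1.
  by rewrite /Q size_addl ?size_polyXn // size_opp size_polyX ltnS.
have Q0 : Q != 0 by rewrite -size_poly_eq0 sQ.
have rQ w : w ^+ p = w -> root Q w.
  by move=> h; rewrite /root /Q !hornerE h subrr.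
have := @max_poly_roots _ Q (z :: map phi (enum 'F_p)) Q0.
rewrite sQ /= size_map -cardE card_Fp // ltnn; apply.
  rewrite /= rQ //=; apply/allP => w /mapP [c _ ->]; apply: rQ.
  by rewrite -rmorphXn; congr (phi _); have := expf_card c; rewrite card_Fp.
rewrite map_inj_uniq ?enum_uniq ?andbT; last exact: fmorph_inj.
by apply/mapP => [[c _ hc]]; move: (hn c); rewrite hc eqxx.
Qed.

Lemma lucas_div_odd a1 a2 p : prime p -> p != 2%N -> ~~ (p%:Z %| a2)%Z ->
  ~~ (p%:Z %| disc a1 a2)%Z ->
  if [exists y : 'I_p, (p%:Z %| (y%:Z)^+2 - disc a1 a2)%Z]
  then (p%:Z %| U a1 a2 p.-1)%Z else (p%:Z %| U a1 a2 p.+1)%Z.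
Proof.
move=> pp p2 pa2 pD.
have [K [phi _]] := @countable_algebraic_closure ('F_p).
have pK : p \in [pchar K].
  apply/andP; split=> //; rewrite -(rmorph_nat phi) pchar_Fp_0 //; by rewrite rmorph0.
have dz z : (p%:Z %| z)%Z = (z%:~R == 0 :> K) := dvdz_pcharf pK z.
set A1 : K := a1%:~R; set A2 : K := a2%:~R; set D : K := (disc a1 a2)%:~R.
have [al hal] := @GRing.solve_monicpoly K 2 (fun i => if i == 0%N then A2 else A1) isT.
have hal' : al ^+ 2 = A1 * al + A2.
  by rewrite hal !big_ord_recl big_ord0 /= expr0 expr1 mulr1 addr0 addrC.
pose be := A1 - al.
have hs : al + be = a1%:~R by rewrite /be addrC subrK.
have hp : al * be = - a2%:~R.
  by rewrite /be mulrBr -expr2 hal' /A2; ring.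
have hDK : (al - be) ^+ 2 = D.
  rewrite /D /disc rmorphD rmorphM /= rmorphXn /= -/A1 -/A2 /be.
  have -> : (al - (A1 - al)) ^+ 2 = 4 * al^+2 - 4 * A1 * al + A1 ^+ 2 by ring.
  rewrite hal'; ring.
have hne : al - be != 0.
  apply: contra pD => /eqP h; rewrite dz -/D -hDK h; by rewrite expr0n.
have A2nz : A2 != 0 by rewrite /A2 -dz.
have alnz : al != 0 by apply: contra A2nz => /eqP h; rewrite -oppr_eq0 -hp h mul0r.
have benz : be != 0 by apply: contra A2nz => /eqP h; rewrite -oppr_eq0 -hp h mulr0.
have Ucast n : (U a1 a2 n)%:~R * (al - be) = al ^+ n - be ^+ n by exact: U_roots.
have Zof m : al ^+ m = be ^+ m -> (p%:Z %| U a1 a2 m)%Z.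
  move=> h; rewrite dz -(mulIr_eq0 _ (mulIf hne)) Ucast h subrr //.
pose Fr := pFrobenius_aut pK.
have FrE w : Fr w = w ^+ p by rewrite /Fr pFrobenius_autE.
have FrA1 : Fr A1 = A1 by rewrite /Fr rmorph_int.
have Frbe : Fr be = A1 - Fr al by rewrite /be /Fr rmorphB /= -/Fr FrA1.
have Frroot : (Fr al) ^+ 2 = A1 * Fr al + A2.
  by rewrite /Fr -rmorphXn hal' rmorphD rmorphM /= -/Fr FrA1 /Fr /A2 rmorph_int.
have key : (Fr al - al) * (Fr al - be) = 0.
  have -> : (Fr al - al) * (Fr al - be) =
     ((Fr al) ^+ 2 - A1 * Fr al - A2) - (al ^+ 2 - A1 * al - A2) by rewrite /be; ring.
  by rewrite Frroot hal'; ring.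
case: ifP => E.
  case/existsP: E => y hy.
  pose Y : K := (y%:Z)%:~R.
  have hY : Y ^+ 2 = D.
    by apply/eqP; rewrite -subr_eq0; move: hy; rewrite dz rmorphB rmorphXn.
  have FrY : Fr Y = Y by rewrite /Fr /Y rmorph_int.
  have h2 : (2 : K) != 0.
    rewrite -[2]/((2%:Z)%:~R) -dz; apply/negP => /= h.
    have h' : (p %| 2)%N := h.
    by move: p2; rewrite -(dvdn_prime2 pp (isT : prime 2)) h'.
  have Ffix : Fr (al - be) = al - be.
    have : (al - be - Y) * (al - be + Y) = 0.
      have -> : (al - be - Y) * (al - be + Y) = (al - be) ^+ 2 - Y ^+ 2 by ring.
      by rewrite hDK hY subrr.
    move/eqP; rewrite mulf_eq0 subr_eq0 addr_eq0 => /orP [] /eqP ->;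
      by rewrite /Fr ?rmorphN /= -/Fr FrY.
  have hal1 : al ^+ p = al.
    apply/eqP; rewrite -FrE -subr_eq0 -(mulrI_eq0 _ (mulfI h2)).
    move: Ffix; rewrite /Fr rmorphB /= -/Fr Frbe /be => /eqP; rewrite -subr_eq0.
    by have -> : Fr al - (A1 - Fr al) - (al - (A1 - al)) = 2 * (Fr al - al) by ring.
  have hbe1 : be ^+ p = be by rewrite -FrE Frbe FrE hal1.
  have pm : p = p.-1.+1 by rewrite prednK // prime_gt0.
  apply: Zof.
  have -> : al ^+ p.-1 = 1.
    by apply: (mulIf alnz); rewrite mul1r -exprSr -pm hal1.
  by apply: (mulIf benz); rewrite mul1r -exprSr -pm hbe1.
have Frne : Fr al != al.
  apply/negP => /eqP hfix.
  have [c hc] := fixed_in_image p K phi al pp (etrans (esym (FrE al)) hfix).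
  pose e : 'F_p := 2 * c - a1%:~R.
  have he : phi e = al - be by rewrite /e rmorphB rmorphM /= hc rmorph_nat rmorph_int /be -/A1; ring.
  have he2 : e ^+ 2 = (disc a1 a2)%:~R.
    by apply: (fmorph_inj phi); rewrite rmorphXn he hDK rmorph_int.
  have ltp : (val e < p)%N.
    by apply: (leq_trans (ltn_ord e)); rewrite (Fp_cast pp).
  move/negbT: E => /existsPn /(_ (Ordinal ltp)); rewrite -Fp_int_eq0 //.
  rewrite rmorphB rmorphXn /= -he2 /=.
  suff -> : ((val e)%:Z%:~R : 'F_p) = e by rewrite subrr eqxx.
  by rewrite -pmulrn natr_Zp.
have Fral : Fr al = be.
  move/eqP: key; rewrite mulf_eq0 => /orP [h|h].
    by move: Frne; rewrite -subr_eq0 h.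
  by apply/eqP; rewrite -subr_eq0.
have Frbe' : Fr be = al by rewrite Frbe Fral /be; ring.
apply: Zof; rewrite !exprS -!FrE Fral Frbe'; ring.
Qed.

Lemma disc_mod8 (a1 a2 : int) : ~~ (2%:Z %| a2)%Z -> ~~ (2%:Z %| disc a1 a2)%Z ->
  ((disc a1 a2) %% 8 = 5)%Z.
Proof.
move=> h2 hD.
have [i ha2] : exists i, a2 = i * 2 + 1 by exists (a2 %/ 2)%Z; lia.
have ha1 : exists j, a1 = j * 4 + 1 \/ a1 = j * 4 + 3.
  exists (a1 %/ 4)%Z.
    have : ~~ (2%:Z %| a1)%Z.
      apply: contra hD => /dvdzP [k ->]; apply/dvdzP; exists (k^+2 * 2 + 2 * a2).
      rewrite /disc; ring.
    lia.
case: ha1 => j [] ->; rewrite /disc ha2.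
  have -> : ((j * 4 + 1) ^+ 2 + 4 * (i * 2 + 1)) =
          (2 * j^+2 + j + i) * 8 + 5 by ring.
  by rewrite modzMDl.
have -> : ((j * 4 + 3) ^+ 2 + 4 * (i * 2 + 1)) =
        (2 * j^+2 + 3 * j + 1 + i) * 8 + 5 by ring.
by rewrite modzMDl.
Qed.

Section Rank.
Variables (a1 a2 : int) (p : nat).
Hypothesis pp : prime p.
Hypothesis pa2 : ~~ (p%:Z %| a2)%Z.
Let Z k := (p%:Z %| U a1 a2 k)%Z.
Let u k := ((U a1 a2 k)%:~R : 'F_p).
Let A2 := (a2%:~R : 'F_p).
Lemma A2nz : A2 != 0. Proof. by rewrite /A2 Fp_int_eq0. Qed.
Lemma ZE k : Z k = (u k == 0). Proof. by rewrite /Z /u Fp_int_eq0. Qed.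
Lemma u_add m n : u (m + n).+1 = u m.+1 * u n.+1 + A2 * u m * u n.
Proof. by rewrite /u U_add rmorphD !rmorphM. Qed.
Lemma u_rec n : u n.+2 = a1%:~R * u n.+1 + A2 * u n.
Proof. by rewrite /u U_rec rmorphD !rmorphM. Qed.

Lemma consec k : ~~ (Z k && Z k.+1).
Proof.
rewrite !ZE; elim: k => [|k IH]; first by rewrite /u U1 oner_eq0 andbF.
apply/negP => /andP[/eqP h1]; rewrite u_rec h1 mulr0 add0r mulf_eq0 (negbTE A2nz) /=.
by move=> h0; move: IH; rewrite h0 h1 eqxx.
Qed.

Lemma Z_add m n : Z m -> Z n -> Z (m + n).
Proof.
rewrite !ZE; case: m => [|m]; first by rewrite add0n.
move=> /eqP hm /eqP hn; rewrite addSn u_add hm hn; apply/eqP; ring.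
Qed.

Lemma Z_sub m n : Z n -> Z (m + n) -> Z m.
Proof.
case: n => [|n]; first by rewrite addn0.
move=> hn; have hn' : ~~ Z n by move: (consec n); rewrite hn andbT.
rewrite !ZE in hn hn' *; rewrite addnS addnC u_add (eqP hn) mul0r add0r.
by rewrite !mulf_eq0 (negbTE A2nz) (negbTE hn') /=.
Qed.

Lemma Z_mul q r : Z r -> Z (q * r).
Proof.
move=> hr; elim: q => [|q IH]; first by rewrite mul0n /Z U0 dvdz0.
by rewrite mulSn; apply: Z_add.
Qed.

Lemma rho_spec : (exists k, (0 < k)%N && Z k) ->
  [/\ (0 < rho a1 a2 p)%N, Z (rho a1 a2 p) & forall k, Z k -> (rho a1 a2 p %| k)%N].
Proof.
move=> ex; rewrite /rho; case: pselect => [h|n]; last by case: (n ex).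
case: ex_minnP => r /andP[r0 Zr] rmin; split=> // k Zk.
have Zm : Z (k %% r).
  apply: (@Z_sub _ (k %/ r * r)); first exact: Z_mul.
  by rewrite addnC -divn_eq.
case: (posnP (k %% r)) => [/eqP|] hm; first by rewrite /dvdn hm.
have := rmin _ (introT andP (conj hm Zm)); rewrite leqNgt ltn_mod r0 //.
Qed.
End Rank.

Lemma dinf_pnat d v : (0 < d)%N -> dinf d v = \pi(d).-nat v.
Proof.
move=> d0; rewrite /dinf /pnat; congr (_ && _); apply: eq_in_all => p pv.
have pp : prime p by move: pv; rewrite mem_primes => /andP[].
by rewrite /= -topredE /= mem_primes pp d0.
Qed.

Lemma dinf_char d i v : (0 < d)%N -> (0 < i)%N -> dinf d v ->
  ((v %| i)%N && coprime d (i %/ v)) = (v == i`_\pi(d))%N.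
Proof.
move=> d0 i0; rewrite dinf_pnat // => pv.
have v0 : (0 < v)%N by case/andP: pv.
apply/idP/eqP.
  case/andP => vi cd.
  have iv0 : (0 < i %/ v)%N by rewrite divn_gt0 // dvdn_leq.
  have iE : i = (v * (i %/ v))%N by rewrite mulnC divnK.
  rewrite iE partnM // part_pnat_id // part_p'nat ?muln1 //.
  by rewrite -coprime_pi'.
move=> ->; rewrite dvdn_part /=.
rewrite -{1}(partnC \pi(d) i0) mulKn //.
by rewrite -{1}(partn_pi d0) coprime_partC.
Qed.
Lemma moebius1 : moebius 1 = 1. Proof. by []. Qed.

Lemma moebius_pq q b : prime q -> (0 < b)%N -> ~~ (q %| b)%N ->
  moebius (q * b) = - moebius b.
Proof.
move=> pq b0 qb.
have q0 := prime_gt0 pq.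
have qnb : q \notin primes b by rewrite mem_primes pq b0 /=.
have pe : perm_eq (primes (q * b)) (q :: primes b).
  apply: uniq_perm; rewrite ?primes_uniq //= ?qnb ?primes_uniq //.
  move=> r; rewrite primesM // primes_prime // inE.
  by [].
rewrite /moebius muln_gt0 q0 b0 /= (perm_size pe) /= exprS.
rewrite (perm_all _ pe) /= lognM // logn_prime // eqxx.
have -> : logn q b = 0%N by apply/eqP; rewrite -leqn0 leqNgt logn_gt0.
rewrite /=.
have -> : all (fun p => logn p (q * b) == 1%N) (primes b) =
          all (fun p => logn p b == 1%N) (primes b).
  apply: eq_in_all => r rb; rewrite lognM // logn_prime //.
  have -> : (r == q) = false by apply/eqP => h; move: rb; rewrite h (negbTE qnb).
  by [].
by case: all; rewrite ?mulN1r ?oppr0.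
Qed.

Lemma moebius_sq0 a q : prime q -> (1 < logn q a)%N -> moebius a = 0.
Proof.
move=> pq lq; rewrite /moebius.
have : q \in primes a by rewrite -logn_gt0 (ltn_trans _ lq).
move=> qa; case: ifP => // /andP [_ /allP /(_ q qa)]; by rewrite gtn_eqF.
Qed.

Lemma moebius_split d q (F : nat -> int) : prime q -> (0 < d)%N -> (q %| d)%N ->
  \sum_(a <- divisors d) moebius a * F a =
  \sum_(a <- divisors (d %/ q ^ logn q d)%N) moebius a * (F a - F (q * a)).
Proof.
move=> pq d0 qd.
set k := logn q d; set d' := (d %/ q ^ k)%N.
have q0 := prime_gt0 pq.
have k0 : (0 < k)%N by rewrite /k logn_gt0 mem_primes pq d0 qd.
have dE : d = (q ^ k * d')%N by rewrite mulnC divnK // pfactor_dvdnn.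
have d'0 : (0 < d')%N by move: d0; rewrite dE muln_gt0 => /andP[].
have ld' : logn q d' = 0%N by rewrite /d' logn_div ?pfactor_dvdnn // pfactorK // subnn.
have l0 a : (0 < a)%N -> (logn q a == 0%N) = ~~ (q %| a)%N.
  by move=> a0; rewrite -leqn0 leqNgt logn_gt0 mem_primes pq a0.
have qd' : ~~ (q %| d')%N by rewrite -l0 // ld'.
have P0 a : (a \in divisors d) && (logn q a == 0%N) = (a \in divisors d').
  rewrite -!dvdn_divisors //.
  case: (posnP a) => [->|a0]; first by rewrite !dvd0n; move: d0 d'0; rewrite !lt0n => /negbTE -> /negbTE ->.
  rewrite l0 //; apply/idP/idP.
    case/andP => ad qa; move: ad; rewrite dE Gauss_dvdr //.
    by rewrite coprime_sym coprime_pexpl // prime_coprime.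
  move=> ad; rewrite dE dvdn_mull //=.
  by apply: contra qd' => qa; apply: dvdn_trans ad.
have P1 a : (a \in divisors d) && (logn q a == 1%N) =
            (a \in map (muln q) (divisors d')).
  apply/idP/idP.
    case/andP => ad la.
    have a0 : (0 < a)%N by move: ad; rewrite -dvdn_divisors // => /dvdn_gt0; apply.
    have qa : (q %| a)%N by move: (l0 a a0); rewrite (eqP la) /= => /esym/negbFE.
    have aE : a = (q * (a %/ q))%N by rewrite mulnC divnK.
    have b0 : (0 < a %/ q)%N by rewrite divn_gt0 // dvdn_leq.
    apply/mapP; exists (a %/ q)%N => //; rewrite -P0; apply/andP; split.
      move: ad; rewrite -!dvdn_divisors // => ad; apply: dvdn_trans ad.
      by rewrite {2}aE dvdn_mull.
    by move: la; rewrite {1}aE lognM // logn_prime // eqxx add1n eqSS.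
  case/mapP => b bd' ->; have := bd'; rewrite -P0 => /andP [bd lb].
  have b0 : (0 < b)%N by move: bd; rewrite -dvdn_divisors // => /dvdn_gt0; apply.
  rewrite lognM // logn_prime // eqxx (eqP lb) andbT -dvdn_divisors //.
  rewrite -dvdn_divisors // in bd'; rewrite dE dvdn_mul //.
  exact: dvdn_exp k0 (dvdnn q).
have S0 : \sum_(a <- divisors d | logn q a == 0%N) moebius a * F a =
          \sum_(a <- divisors d') moebius a * F a.
  rewrite -big_filter; apply: perm_big; apply: uniq_perm.
  - by rewrite filter_uniq // divisors_uniq.
  - exact: divisors_uniq.
  by move=> y; rewrite mem_filter andbC P0.
have S1 : \sum_(a <- divisors d | ~~ (logn q a == 0%N) && (logn q a == 1%N)) moebius a * F a =
          \sum_(a <- divisors d') - (moebius a * F (q * a)%N).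
  have -> : \sum_(a <- divisors d | ~~ (logn q a == 0%N) && (logn q a == 1%N)) moebius a * F a
       = \sum_(a <- divisors d | logn q a == 1%N) moebius a * F a.
    by apply: eq_bigl => y; case: (logn q y) => [|[|]].
  rewrite -big_filter.
  rewrite (perm_big (map (muln q) (divisors d'))); last first.
    apply: uniq_perm.
    - by rewrite filter_uniq // divisors_uniq.
    - rewrite map_inj_uniq ?divisors_uniq // => x y /eqP; rewrite eqn_pmul2l // => /eqP.
      by [].
    by move=> y; rewrite mem_filter andbC P1.
  rewrite big_map; apply: eq_big_seq => b; rewrite -P0 => /andP [bd lb].
  have b0 : (0 < b)%N by move: bd; rewrite -dvdn_divisors // => /dvdn_gt0; apply.
  by rewrite moebius_pq // ?mulNr // -l0.
rewrite (bigID (fun a => logn q a == 0%N)) /= S0.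
rewrite [X in _ + X](bigID (fun a => logn q a == 1%N)) /= S1.
rewrite [X in _ + (_ + X)]big1; last first.
  move=> y /andP [h0 h1]; rewrite (moebius_sq0 y q pq) ?mul0r //.
  by move: h0 h1; case: (logn q y) => [|[|]].
rewrite addr0 -big_split /=; apply: eq_bigr => y _; ring.
Qed.

Lemma moebius_dvd_sum d m : (0 < d)%N -> (0 < m)%N ->
  \sum_(a <- divisors d) moebius a * ((a %| m)%N : nat)%:Z = ((coprime d m) : nat)%:Z.
Proof.
move=> + m0; elim/ltn_ind: d => d IH d0.
case: (ltngtP d 1) => [|d1|->]; first by rewrite ltnS leqn0 => /eqP d00; rewrite d00 in d0.
  pose q := pdiv d; have pq : prime q by exact: pdiv_prime.
  have qd : (q %| d)%N := pdiv_dvd d.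
  rewrite (moebius_split _ _ _ pq d0 qd).
  set k := logn q d; set d' := (d %/ q ^ k)%N.
  have q0 := prime_gt0 pq.
  have k0 : (0 < k)%N by rewrite /k logn_gt0 mem_primes pq d0 qd.
  have dE : d = (q ^ k * d')%N by rewrite mulnC divnK // pfactor_dvdnn.
  have d'0 : (0 < d')%N by move: d0; rewrite dE muln_gt0 => /andP[].
  have ld' : logn q d' = 0%N by rewrite /d' logn_div ?pfactor_dvdnn // pfactorK // subnn.
  have qd' : ~~ (q %| d')%N.
    by apply/negP => h; move: ld'; apply/eqP; rewrite -lt0n logn_gt0 mem_primes pq d'0.
  have d'lt : (d' < d)%N.
    rewrite /d' ltn_Pdiv //; rewrite -[1%N](expn0 q) ltn_exp2l //; exact: prime_gt1.
  have cdm : coprime d m = coprime q m && coprime d' m.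
    by rewrite dE coprimeMl coprime_pexpl.
  case: (boolP (q %| m)%N) => qm.
    rewrite cdm prime_coprime // qm /=.
    rewrite big_seq big1 // => b; rewrite -dvdn_divisors // => bd.
    have cqb : coprime q b.
      by rewrite prime_coprime //; apply: contra qd' => qb; apply: dvdn_trans bd.
    by rewrite Gauss_dvd // qm /= subrr mulr0.
  rewrite cdm prime_coprime // qm /= -(IH d') //.
  apply: eq_bigr => b _; congr (_ * _).
  have -> : (q * b %| m)%N = false.
    by apply/negP => h; move/negP: qm; apply; apply: dvdn_trans h; apply: dvdn_mulr.
  by rewrite subr0.
have -> : divisors 1 = [:: 1%N] by [].
by rewrite big_seq1 moebius1 dvd1n coprime1n.
Qed.

Lemma count_id d nn r N : (0 < d)%N -> (0 < nn)%N -> (0 < r)%N -> (r %| nn)%N ->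
  (nn < N)%N ->
  \sum_(v < N | dinf d v) \sum_(a <- divisors d)
     moebius a * (((d * v %| nn) && (a * v %| nn %/ r))%N : nat)%:Z
  = ((d %| r)%N : nat)%:Z.
Proof.
move=> d0 nn0 r0 rn nnN.
set i := (nn %/ r)%N.
have i0 : (0 < i)%N by rewrite divn_gt0 // dvdn_leq.
have nnE : nn = (i * r)%N by rewrite divnK.
set w := (i`_\pi(d))%N.
have w0 : (0 < w)%N := part_gt0 _ _.
have step1 v : dinf d v ->
  \sum_(a <- divisors d) moebius a * (((d * v %| nn) && (a * v %| i))%N : nat)%:Z
  = (((d * v %| nn) && (v == w))%N : nat)%:Z.
  move=> dv; have v0 : (0 < v)%N by case/andP: dv.
  rewrite -dinf_char //.
  case: (boolP (v %| i)%N) => vi; last first.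
    rewrite andbF /= big1 // => a _.
    have -> : (a * v %| i)%N = false.
      by apply/negP => h; move/negP: vi; apply; apply: dvdn_trans h; apply: dvdn_mull.
    by rewrite andbF mulr0.
  rewrite /=; case: (d * v %| nn)%N => /=; last first.
    by rewrite big1 // => a _; rewrite mulr0.
  have iv0 : (0 < i %/ v)%N by rewrite divn_gt0 // dvdn_leq.
  rewrite -(moebius_dvd_sum d (i %/ v)%N d0 iv0); apply: eq_bigr => a _.
  by rewrite -{1}(divnK vi) dvdn_pmul2r.
rewrite (eq_bigr (fun v : 'I_N => (((d * v %| nn) && (nat_of_ord v == w))%N : nat)%:Z)); last first.
  by move=> v dv; rewrite step1.
have wN : (w < N)%N.
  apply: leq_ltn_trans nnN; apply: (leq_trans (dvdn_leq i0 (dvdn_part _ _))).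
  by rewrite nnE leq_pmulr.
have dw : dinf d w by rewrite dinf_pnat // part_pnat.
rewrite (bigD1 (Ordinal wN)) //= eqxx andbT big1 ?addr0; last first.
  move=> v /andP [_ vw]; rewrite andbC.
  have -> : (nat_of_ord v == w) = false.
    by apply/negP => /eqP h; move/negP: vw; apply; apply/eqP; apply: val_inj.
  by [].
congr (Posz (nat_of_bool _)).
have iE : i = (w * i`_\pi(d)^')%N by rewrite partnC.
rewrite nnE iE -mulnA [X in (_ %| X)%N]mulnC dvdn_pmul2r // Gauss_dvdr //.
by rewrite -{1}(partn_pi d0) coprime_partC.
Qed.

Lemma good_prime a1 a2 p : prime p -> ~~ (p%:Z %| a2 * disc a1 a2)%Z ->
  exists nn : nat, [/\ p%:Z - legendre (disc a1 a2) p = nn%:Z, (0 < nn)%N,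
    (nn <= p.+1)%N, (0 < rho a1 a2 p)%N & (rho a1 a2 p %| nn)%N].
Proof.
move=> pp hbad.
have pa2 : ~~ (p%:Z %| a2)%Z by apply: contra hbad; apply: dvdz_mulr.
have pD : ~~ (p%:Z %| disc a1 a2)%Z by apply: contra hbad; apply: dvdz_mull.
have [nn [hnn nn0 nnp Znn]] : exists nn : nat,
   [/\ p%:Z - legendre (disc a1 a2) p = nn%:Z, (0 < nn)%N, (nn <= p.+1)%N
     & (p%:Z %| U a1 a2 nn)%Z].
  rewrite /legendre (negbTE pD).
  case: (eqVneq p 2%N) => [p2|p2].
    subst p; rewrite /= disc_mod8 //=; exists 3%N; split=> //.
    have a1o : ~~ (2%:Z %| a1)%Z.
      apply: contra pD => /dvdzP [k ->]; apply/dvdzP; exists (k^+2 * 2 + 2 * a2).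
      rewrite /disc; ring.
    have [k hk] : exists k, a1 = k * 2 + 1 by exists (a1 %/ 2)%Z; lia.
    have [j hj] : exists j, a2 = j * 2 + 1 by exists (a2 %/ 2)%Z; lia.
    rewrite U_rec U_rec U1 U0 hk hj; apply/dvdzP.
    exists (2 * k ^+ 2 + 2 * k + j + 1); ring.
  have := lucas_div_odd a1 a2 p pp p2 pa2 pD.
  have p0 := prime_gt0 pp; have p1 := prime_gt1 pp.
  case: ifP => _ h.
    by exists p.-1; split=> //; [lia | rewrite -ltnS prednK // ltnW | lia].
  by exists p.+1; split=> //; lia.
have ex : exists k, (0 < k)%N && (p%:Z %| U a1 a2 k)%Z by exists nn; rewrite nn0.
have [r0 _ rdiv] := rho_spec a1 a2 p pp pa2 ex.
by exists nn; split=> //; apply: rdiv.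
Qed.

Lemma pc_int (R : realType) (x : R) (P : pred nat) :
  (prime_count x P)%:Z =
  \sum_(p < (Num.truncn x).+1 | prime p && (p%:R <= x)) ((P p : nat)%:Z).
Proof.
rewrite /prime_count (big_morph Posz PoszD (erefl _)) big_mkcondr /=.
by apply: eq_bigr => i _; case: (P i).
Qed.

Theorem lemma6p1 (a1 a2 : int) (ha1 : a1 != 0) (ha2 : a2 != 0)
  (hnotunity : forall alpha beta : algC,
     'X^2 - (a1%:~R) *: 'X - (a2%:~R)%:P = ('X - alpha%:P) * ('X - beta%:P) ->
     ~ exists n : nat, (0 < n)%N /\ (alpha / beta) ^+ n = 1)
  (hnotsq : ~ exists z : int, z ^+ 2 = disc a1 a2)
  (d : nat) (hd : (0 < d)%N) (R : realType) (x : R) (hx : 1 < x) :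
  exists N0 : nat, forall N : nat, (N0 <= N)%N ->
    (RU a1 a2 d x)%:Z =
      \sum_(v < N | dinf d v) \sum_(a <- divisors d)
          moebius a * (piU a1 a2 (d * v) (a * v) x)%:Z.
Proof.
exists (Num.truncn x).+2 => N hN.
set T := (Num.truncn x).+1.
have E (v : 'I_N) : \sum_(a <- divisors d) moebius a * (piU a1 a2 (d * v) (a * v) x)%:Z
   = \sum_(p < T | prime p && (p%:R <= x)) \sum_(a <- divisors d)
       moebius a * (([&& ~~ (p%:Z %| a2 * disc a1 a2)%Z,
                              (p%:Z == legendre (disc a1 a2) p %[mod (d * v)%N%:Z])%Z
                            & ((a * v)%N%:Z %| iotaU a1 a2 p)%Z] : nat)%:Z).
  rewrite -exchange_big /=; apply: eq_bigr => a _.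
  by rewrite /piU pc_int mulr_sumr.
rewrite (eq_bigr _ (fun v _ => E v)) exchange_big /= /RU pc_int.
apply: eq_bigr => p /andP [pp _].
case: (boolP (p%:Z %| a2 * disc a1 a2)%Z) => hb.
  by rewrite /= big1 // => v _; rewrite big1 // => a _; rewrite /= mulr0.
have [nn [hnn nn0 nnp r0 rdiv]] := good_prime a1 a2 p pp hb.
have hI : iotaU a1 a2 p = (nn %/ rho a1 a2 p)%N%:Z by rewrite /iotaU hnn divz_nat.
have hM n : (p%:Z == legendre (disc a1 a2) p %[mod n%:Z])%Z = (n %| nn)%N.
  by rewrite eqz_mod_dvd hnn.
have nnN : (nn < N)%N.
  have := ltn_ord p; rewrite -/T => pT.
  apply: leq_trans hN; rewrite /T in pT; lia.
rewrite /= -(count_id d nn (rho a1 a2 p) N hd nn0 r0 rdiv nnN).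
apply: eq_bigr => v _; apply: eq_bigr => a _.
by rewrite hI hM.
Qed.
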